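(* Let $q$ be an indeterminate and let $l$ be a positive integer. For $(a,b)\in\{(1,1),(1,0),(0,1)\}$ the following identity of formal power series in $z$ holds: \[ \sum_{m\geq0}\sum_{k\geq0} h_{m-2k}(\{1\}^{k+a},\{q\}^{k+b})\left(\frac{q^l}{[l]^2}\right)^k z^m =\frac{[l]^2}{[2l]}\cdot \begin{cases} \dfrac{[l+1]}{[l]-[l+1]z}-\dfrac{q[l-1]}{[l]-q[l-1]z}, & (a,b)=(1,1),\\[2mm] \dfrac{1}{[l]-[l+1]z}+\dfrac{q^l}{[l]-q[l-1]z}, & (a,b)=(1,0),\\[2mm] \dfrac{q^l}{[l]-[l+1]z}+\dfrac{1}{[l]-q[l-1]z}, & (a,b)=(0,1). \end{cases} \]
   Context: For an integer $k\ge 0$, $[k]=\frac{1-q^k}{1-q}$. For integers $r,s\geq0$, $h_n(\{1\}^r,\{x\}^s)$ denotes the $n$-th complete homogeneous symmetric function in $r+s$ variables of which $r$ are specialized to $1$ and $s$ to $x$, i.e. $\sum_{n\geq0}h_n(\{1\}^r,\{x\}^s)z^n=\frac{1}{(1-z)^r(1-xz)^s}$; in particular $h_n=0$ for $n<0$. By convention $h_n(\{1\}^r,\{x\}^s)=0$ if $r<0$ or $s<0$. *)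

(* Defs.v *)
From HB Require Import structures.
From mathcomp Require Import all_boot all_order all_algebra.
Set Implicit Arguments. Unset Strict Implicit. Unset Printing Implicit Defensive.
Import Order.TTheory GRing.Theory Num.Theory.
Local Open Scope ring_scope.

Definition fps (K : fieldType) := nat -> K.

Section FPS.
Variable K : fieldType.
Implicit Types f g : fps K.

Definition fps_const (c : K) : fps K := fun n => if n is 0%N then c else 0.
Definition fps_z : fps K := fun n => if n == 1%N then 1 else 0.
Definition fps_add f g : fps K := fun n => f n + g n.
Definition fps_scale (c : K) f : fps K := fun n => c * f n.
Definition fps_mul f g : fps K := fun n => \sum_(i < n.+1) f i * g (n - i)%N.
Definition fps_pow f (k : nat) : fps K := iter k (fps_mul f) (fps_const 1).

(* Multiplicative inverse of a series with nonzero constant term: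
   g 0 = 1/f 0,  g n = -(1/f 0) * sum_(1<=i<=n) f i * g (n-i). *)
Fixpoint fps_inv_seq f (n : nat) : seq K :=
  match n with
  | 0%N => [:: (f 0%N)^-1]
  | n'.+1 => let s := fps_inv_seq f n' in
      rcons s (- (f 0%N)^-1 * \sum_(1 <= i < n'.+2) f i * nth 0 s (n'.+1 - i))
  end.
Definition fps_inv f : fps K := fun n => nth 0 (fps_inv_seq f n) n.

(* h_n({1}^r,{x}^s) : coefficients of 1/((1-z)^r (1-xz)^s) *)
Definition hcomp (r s : nat) (x : K) : fps K :=
  fps_inv (fps_mul (fps_pow (fps_add (fps_const 1) (fps_scale (-1) fps_z)) r)
                   (fps_pow (fps_add (fps_const 1) (fps_scale (- x) fps_z)) s)).

Definition fps_geom (c d : K) : fps K :=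
  fps_inv (fps_add (fps_const c) (fps_scale (- d) fps_z)).
End FPS.

Definition Qq := {fraction {poly rat}}.
Definition qvar : Qq := tofrac ('X : {poly rat}).

Definition qint (k : nat) : Qq := (1 - qvar ^+ k) / (1 - qvar).

(* LHS: sum_m sum_k h_{m-2k}({1}^{k+a},{q}^{k+b}) (q^l/[l]^2)^k z^m ;
   terms with 2k > m vanish since h_n = 0 for n < 0. *)
Definition lhs_series (l a b : nat) : fps Qq := fun m =>
  \sum_(k < (m./2).+1)
     hcomp (k + a) (k + b) qvar (m - 2 * k)%N * (qvar ^+ l / (qint l ^+ 2)) ^+ k.

(* Main.v *)
Require Import Defs.
From HB Require Import structures.
From mathcomp Require Import all_boot all_order all_algebra.
From mathcomp Require Import boolp.
From mathcomp Require Import ring.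
Unset Printing Implicit Defensive.
Import GRing.Theory.
Local Open Scope ring_scope.

Section PS.
Variable K : fieldType.
Definition ps := fps K.
HB.instance Definition _ := gen_eqMixin ps.
HB.instance Definition _ := gen_choiceMixin ps.

Definition ps0 : ps := fps_const 0.
Definition psopp (f : ps) : ps := fun n => - f n.
Definition psadd (f g : ps) : ps := fps_add f g.

Lemma ps_addA : associative psadd.
Proof. by move=> f g h; apply: funext => n; rewrite /psadd /fps_add addrA. Qed.
Lemma ps_addC : commutative psadd.
Proof. by move=> f g; apply: funext => n; rewrite /psadd /fps_add addrC. Qed.
Lemma ps_add0 : left_id ps0 psadd.
Proof. by move=> f; apply: funext => n; rewrite /psadd /fps_add /ps0 /fps_const; case: n => [|n]; rewrite add0r. Qed.
Lemma ps_addN : left_inverse ps0 psopp psadd.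
Proof. by move=> f; apply: funext => n; rewrite /psadd /fps_add /ps0 /psopp /fps_const addNr; case: n. Qed.

HB.instance Definition _ := GRing.isZmodule.Build ps ps_addA ps_addC ps_add0 ps_addN.

Definition trunc (N : nat) (f : ps) : {poly K} := \poly_(i < N.+1) f i.

Lemma mul_trunc N (f g : ps) m : (m <= N)%N ->
  fps_mul f g m = (trunc N f * trunc N g)`_m.
Proof.
move=> hm; rewrite coefM /fps_mul; apply: eq_bigr => i _.
have hi : (i < N.+1)%N by rewrite (leq_trans (ltn_ord i)) // ltnS.
have hj : (m - i < N.+1)%N by rewrite ltnS (leq_trans (leq_subr _ _)).
by rewrite /trunc !coef_poly hi hj.
Qed.

Lemma coefM_ext (p q q' : {poly K}) m : (forall i, (i <= m)%N -> q`_i = q'`_i) ->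
  (p * q)`_m = (p * q')`_m.
Proof. by move=> h; rewrite !coefM; apply: eq_bigr => i _; rewrite h // leq_subr. Qed.

Lemma coefM_extl (p p' q : {poly K}) m : (forall i, (i <= m)%N -> p`_i = p'`_i) ->
  (p * q)`_m = (p' * q)`_m.
Proof. by move=> h; rewrite ![(_ * q)%R]mulrC; apply: coefM_ext. Qed.

Lemma ps_mulA : associative (@fps_mul K).
Proof.
move=> f g h; apply: funext => n.
rewrite (mul_trunc n f) // (mul_trunc n _ h) //.
rewrite (@coefM_ext _ _ (trunc n g * trunc n h)); last first.
  by move=> i hi; rewrite /trunc coef_poly ltnS (leq_trans hi) // (mul_trunc n).
rewrite [RHS](@coefM_extl _ (trunc n f * trunc n g)); last first.
  by move=> i hi; rewrite /trunc coef_poly ltnS (leq_trans hi) // (mul_trunc n).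
by rewrite mulrA.
Qed.

Lemma ps_mulC : commutative (@fps_mul K).
Proof.
move=> f g; apply: funext => n; rewrite !(mul_trunc n) //; by rewrite mulrC.
Qed.

Lemma ps_mul1 : left_id (fps_const 1 : ps) (@fps_mul K).
Proof.
move=> f; apply: funext => n; rewrite /fps_mul big_ord_recl /= mul1r subn0 big1 ?addr0 //.
by move=> i _; rewrite /fps_const /= mul0r.
Qed.

Lemma ps_mulDl : left_distributive (@fps_mul K) psadd.
Proof.
move=> f g h; apply: funext => n; rewrite /fps_mul /psadd /fps_add -big_split /=.
by apply: eq_bigr => i _; rewrite mulrDl.
Qed.

Lemma ps_one_neq0 : (fps_const 1 : ps) != ps0.
Proof.
apply/eqP => /(congr1 (fun f : ps => f 0%N)) /=; rewrite /fps_const.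
by move/eqP; rewrite oner_eq0.
Qed.

HB.instance Definition _ := GRing.Zmodule_isComNzRing.Build ps ps_mulA ps_mulC ps_mul1 ps_mulDl ps_one_neq0.

Lemma psE_mul (f g : ps) : f * g = fps_mul f g. Proof. by []. Qed.
Lemma psE_add (f g : ps) : f + g = fps_add f g. Proof. by []. Qed.
Lemma psE_one : (1 : ps) = fps_const 1. Proof. by []. Qed.
Lemma ps_addn (f g : ps) n : (f + g) n = f n + g n. Proof. by []. Qed.
Lemma ps_oppn (f : ps) n : (- f) n = - f n. Proof. by []. Qed.
Lemma ps_subn (f g : ps) n : (f - g) n = f n - g n. Proof. by []. Qed.
Lemma ps_zeron n : (0 : ps) n = 0. Proof. by case: n. Qed.

Definition pc (c : K) : ps := fps_const c.
Definition zps : ps := fps_z K.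
Implicit Types f g : ps.

Lemma constD a b : pc (a+b) = pc a + pc b.
Proof. by apply: funext => -[|n] //=; rewrite ps_addn /= addr0. Qed.
Lemma constN a : pc (- a) = - pc a.
Proof. by apply: funext => -[|n] //=; rewrite ps_oppn /= oppr0. Qed.
Lemma constB a b : pc (a-b) = pc a - pc b.
Proof. by rewrite constD constN. Qed.
Lemma const0 : pc 0 = 0. Proof. by []. Qed.
Lemma const1 : pc 1 = 1. Proof. by []. Qed.
Lemma mul_constn c f n : (pc c * f) n = c * f n.
Proof.
rewrite psE_mul /fps_mul big_ord_recl /= subn0 big1 ?addr0 //.
by move=> i _; rewrite /fps_const /= mul0r.
Qed.
Lemma constM a b : pc (a*b) = pc a * pc b.
Proof. by apply: funext => -[|n]; rewrite mul_constn //= mulr0. Qed.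
Lemma constX a k : pc (a ^+ k) = pc a ^+ k.
Proof. by elim: k => [|k IH]; rewrite ?expr0 // !exprS constM IH. Qed.
Lemma scaleE c f : fps_scale c f = pc c * f.
Proof. by apply: funext => n; rewrite mul_constn. Qed.
Lemma powE f k : fps_pow f k = f ^+ k.
Proof. by elim: k => [|k IH] //=; rewrite exprS -IH. Qed.

Lemma ps_mul0 f g : (f * g) 0%N = f 0%N * g 0%N.
Proof. by rewrite psE_mul /fps_mul big_ord1. Qed.
Lemma ps_pow0 f k : (f ^+ k) 0%N = f 0%N ^+ k.
Proof. by elim: k => [|k IH]; rewrite ?expr0 // !exprS ps_mul0 IH. Qed.
Lemma const0n c : pc c 0%N = c. Proof. by []. Qed.
Lemma z0n : zps 0%N = 0. Proof. by []. Qed.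

Lemma mul_zn f n : (zps * f) n = if n is n'.+1 then f n' else 0.
Proof.
rewrite psE_mul /fps_mul big_ord_recl /= mul0r add0r.
case: n => [|n]; first by rewrite big_ord0.
rewrite big_ord_recl /= mul1r subSS subn0 big1 ?addr0 //.
by move=> i _; rewrite /fps_z /= mul0r.
Qed.

Lemma mul_zpown j f n : (zps ^+ j * f) n = if (j <= n)%N then f (n - j)%N else 0.
Proof.
elim: j f n => [|j IH] f n; first by rewrite expr0 mul1r subn0.
rewrite exprSr -mulrA IH mul_zn.
case: (leqP j n) => h; last by rewrite leqNgt (ltn_trans h).
rewrite leq_eqVlt in h; case/orP: h => [/eqP <-|h]; first by rewrite subnn ltnn.
by rewrite h -(subnSK h).
Qed.

Lemma inv_seq_size f n : size (fps_inv_seq f n) = n.+1.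
Proof. by elim: n => [|n IH] //=; rewrite size_rcons IH. Qed.

Lemma inv_seq_nth f n i : (i <= n)%N -> nth 0 (fps_inv_seq f n) i = fps_inv f i.
Proof.
elim: n i => [|n IH] i hi; first by move: hi; rewrite leqn0 => /eqP ->.
rewrite leq_eqVlt in hi; case/orP: hi => [/eqP -> //|hi].
by rewrite /= nth_rcons inv_seq_size hi IH.
Qed.

Lemma fps_invS f n : fps_inv f n.+1 =
  - (f 0%N)^-1 * \sum_(i < n.+1) f i.+1 * fps_inv f (n - i)%N.
Proof.
rewrite {1}/fps_inv /= nth_rcons inv_seq_size ltnn eqxx.
rewrite big_add1 /= big_mkord; congr (_ * _); apply: eq_bigr => i _.
by rewrite subSS inv_seq_nth // leq_subr.
Qed.

Lemma fps_invP f : f 0%N != 0 -> f * fps_inv f = 1.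
Proof.
move=> h; apply: funext => -[|n].
  by rewrite ps_mul0 /fps_inv /= mulfV.
rewrite psE_mul /fps_mul big_ord_recl /= subn0 fps_invS /=.
rewrite mulrA mulrN mulfV // mulN1r.
under [X in _ + X]eq_bigr => i _ do rewrite /bump /= add1n subSS.
by rewrite addNr.
Qed.

Lemma cancel_unit f g g' : f 0%N != 0 -> f * g = f * g' -> g = g'.
Proof.
move=> h e; have hi := fps_invP f h.
have hi' : (fps_inv f : ps) * f = 1 by rewrite mulrC.
by rewrite -[g]mul1r -hi' -mulrA e mulrA hi' mul1r.
Qed.

End PS.
Arguments pc {K}.
Arguments zps {K}.

Section Main.
Variable K : fieldType.
Variables (x t : K).
Local Notation Zq := (@zps K).
Definition Aps : ps K := fps_add (fps_const 1) (fps_scale (-1) (fps_z K)).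
Definition Bps : ps K := fps_add (fps_const 1) (fps_scale (- x) (fps_z K)).
Definition Hs r s : ps K := hcomp r s x.

Lemma Aps0 : Aps 0%N = 1. Proof. by rewrite /Aps /fps_add /fps_scale /= mulr0 addr0. Qed.
Lemma Bps0 : Bps 0%N = 1. Proof. by rewrite /Bps /fps_add /fps_scale /= mulr0 addr0. Qed.

Lemma Q0 r s : (Aps ^+ r * Bps ^+ s) 0%N = 1.
Proof. by rewrite ps_mul0 !ps_pow0 Aps0 Bps0 !expr1n mulr1. Qed.

Lemma HP r s : Aps ^+ r * Bps ^+ s * Hs r s = 1.
Proof.
rewrite /Hs /hcomp !powE; apply: fps_invP.
by rewrite -!powE -/Aps -/Bps !powE Q0 oner_neq0.
Qed.

Lemma Hstep r s : Aps * Bps * Hs r.+1 s.+1 = Hs r s.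
Proof.
apply: (@cancel_unit _ (Aps ^+ r * Bps ^+ s)); first by rewrite Q0 oner_neq0.
rewrite HP -(HP r.+1 s.+1) !exprS; ring.
Qed.

Definition W : ps K := pc t * Zq ^+ 2.
Definition Dps : ps K := Aps * Bps - W.

Definition Lser (a b : nat) : ps K := fun m =>
  \sum_(k < (m./2).+1) hcomp (k + a) (k + b) x (m - 2 * k)%N * t ^+ k.

Definition Sser a b N : ps K := \sum_(k < N) W ^+ k * Hs (k + a) (k + b).

Lemma ps_sumn I (r : seq I) (P : pred I) (F : I -> ps K) n :
  (\sum_(i <- r | P i) F i) n = \sum_(i <- r | P i) F i n.
Proof.
by apply: (big_morph (fun f : ps K => f n)) => [f g|]; rewrite ?ps_addn ?ps_zeron.
Qed.

Lemma Wpown k F n : (W ^+ k * F) n = t ^+ k * (if (2 * k <= n)%N then F (n - 2 * k)%N else 0).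
Proof.
by rewrite /W exprMn -constX -exprM -mulrA mul_constn mul_zpown.
Qed.

Lemma mul_ext (F G G' : ps K) m : (forall i, (i <= m)%N -> G i = G' i) -> (F * G) m = (F * G') m.
Proof. by move=> h; rewrite !psE_mul /fps_mul; apply: eq_bigr => i _; rewrite h // leq_subr. Qed.

Lemma L_S a b m i : (i <= m)%N -> Lser a b i = Sser a b m.+1 i.
Proof.
move=> him; rewrite /Sser ps_sumn /Lser.
rewrite (big_ord_widen m.+1 (fun k => hcomp (k + a) (k + b) x (i - 2 * k)%N * t ^+ k)); last first.
  by rewrite ltnS (leq_trans (half_leq him)) // -divn2 leq_div.
rewrite big_mkcond /=; apply: eq_bigr => k _.
rewrite Wpown ltnS geq_half_double -mul2n.
by case: ifP; rewrite ?mulr0 // mulrC.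
Qed.

Lemma DS a b N : Dps * Sser a b N.+1 = Aps * Bps * Hs a b - W ^+ N.+1 * Hs (N + a) (N + b).
Proof.
elim: N => [|N IH].
  by rewrite /Sser big_ord1 !add0n /Dps expr0 mul1r expr1; ring.
rewrite /Sser big_ord_recr /= -/(Sser a b N.+1) mulrDr IH.
have hs := Hstep (N + a) (N + b); rewrite -!addSn in hs.
rewrite /Dps -hs !exprS; ring.
Qed.

Lemma D0 : Dps 0%N = 1.
Proof.
by rewrite /Dps ps_subn ps_mul0 Aps0 Bps0 /W ps_mul0 ps_pow0 z0n expr0n /= mulr0 subr0 mulr1.
Qed.

Lemma DL a b : Dps * Lser a b = Aps * Bps * Hs a b.
Proof.
apply: funext => m.
rewrite (mul_ext _ _ (Sser a b m.+1)); last by move=> i hi; apply: L_S.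
rewrite DS ps_subn Wpown.
rewrite ifN ?mulr0 ?subr0 // -ltnNge.
by rewrite mul2n -addnn addnS ltnS leq_addl.
Qed.

Lemma Dform a1 b1 g1 : a1 = 1 -> b1 = -(1 + x) -> g1 = x - t ->
  Dps = pc a1 + pc b1 * Zq + pc g1 * Zq ^+ 2.
Proof.
move=> -> -> ->; rewrite /Dps /W /Aps /Bps !scaleE -!psE_add.
rewrite -/(@zps K) -/(pc 1) !constN !constD !constN const1; ring.
Qed.

Lemma geomP c d : c != 0 -> (pc c + pc (- d) * Zq) * fps_geom c d = 1.
Proof.
move=> hc; rewrite /fps_geom scaleE; apply: fps_invP.
by rewrite ps_addn ps_mul0 z0n mulr0 addr0.
Qed.

Lemma RHSgen c1 d1 c2 d2 e c u1 u2 : c1 != 0 -> c2 != 0 ->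
  Dps = pc e * ((pc c1 + pc (- d1) * Zq) * (pc c2 + pc (- d2) * Zq)) ->
  Dps * (pc c * (pc u1 * fps_geom c1 d1 + pc u2 * fps_geom c2 d2)) =
  pc (e * c * (u1 * c2 + u2 * c1)) + pc (e * c * (u1 * (- d2) + u2 * (- d1))) * Zq.
Proof.
move=> h1 h2 ->.
have g1 := geomP c1 d1 h1; have g2 := geomP c2 d2 h2.
set P1 := (pc c1 + pc (- d1) * Zq) in g1 *; set P2 := (pc c2 + pc (- d2) * Zq) in g2 *.
set G1 := fps_geom c1 d1 in g1 *; set G2 := fps_geom c2 d2 in g2 *.
transitivity (pc e * pc c * (pc u1 * P2 * (P1 * G1) + pc u2 * P1 * (P2 * G2))); first by ring.
rewrite g1 g2 !mulr1 /P1 /P2 !constM !constD !constM; ring.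
Qed.


Lemma Dfactor c1 d1 c2 d2 e : e * (c1 * c2) = 1 -> e * (c1 * (- d2) + (- d1) * c2) = -(1 + x) ->
  e * ((- d1) * (- d2)) = x - t ->
  Dps = pc e * ((pc c1 + pc (- d1) * Zq) * (pc c2 + pc (- d2) * Zq)).
Proof.
move=> h1 h2 h3; rewrite (Dform _ _ _ h1 h2 h3) !constM !constD !constM; ring.
Qed.

Lemma H00 : Hs 0 0 = 1.
Proof. by have := HP 0 0; rewrite !expr0 !mul1r. Qed.

Lemma N11 : Aps * Bps * Hs 1 1 = 1.
Proof. by rewrite Hstep H00. Qed.

Lemma N10 : Aps * Bps * Hs 1 0 = pc 1 + pc (- x) * Zq.
Proof.
have := HP 1 0; rewrite expr1 expr0 mulr1 => h.
by rewrite mulrAC h mul1r /Bps scaleE.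
Qed.

Lemma N01 : Aps * Bps * Hs 0 1 = pc 1 + pc (- 1) * Zq.
Proof.
have := HP 0 1; rewrite expr1 expr0 mul1r => h.
by rewrite -mulrA h mulr1 /Aps scaleE.
Qed.

End Main.

Lemma qX_neq1 k : (0 < k)%N -> 1 - qvar ^+ k != 0.
Proof.
move=> hk; rewrite /qvar -tofracXn -tofrac1 -tofracB tofrac_eq0.
apply/eqP => /(congr1 (fun p : {poly rat} => p`_0)).
by rewrite coefB coef1 coefXn coef0 eqxx; case: k hk.
Qed.

Lemma pc_lin1 (K : fieldType) (a b : K) : a = 1 -> b = 0 -> 1 = pc a + pc b * zps.
Proof. by move=> -> ->; rewrite const0 const1 mul0r addr0. Qed.
Lemma pc_lin2 (K : fieldType) (a b a' b' : K) : a' = a -> b' = b -> pc a + pc b * zps = pc a' + pc b' * zps.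
Proof. by move=> -> ->. Qed.

Theorem gen (K : fieldType) (q y L L1 Lm L2 Q : K) :
  1 - q != 0 -> 1 - q * y != 0 -> 1 - (q * y) ^+ 2 != 0 ->
  L = (1 - q * y) / (1 - q) -> L1 = (1 - q * (q * y)) / (1 - q) ->
  Lm = (1 - y) / (1 - q) -> L2 = (1 - (q * y) ^+ 2) / (1 - q) -> Q = q * y ->
  let c := L ^+ 2 / L2 in
  let G1 := fps_geom L L1 in
  let G2 := fps_geom L (q * Lm) in
  [/\ Lser K q (Q / L ^+ 2) 1 1 =
        fps_scale c (fps_add (fps_scale L1 G1)
                             (fps_scale (- (q * Lm)) G2)),
      Lser K q (Q / L ^+ 2) 1 0 =
        fps_scale c (fps_add G1 (fps_scale Q G2)) &
      Lser K q (Q / L ^+ 2) 0 1 =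
        fps_scale c (fps_add (fps_scale Q G1) G2)].
Proof.
move=> hq1 hqy h2 EL EL1 ELm EL2 EQ c G1 G2.
set t := Q / L ^+ 2.
have hinv : (1 - q)^-1 != 0 by rewrite invr_eq0.
have hl0 : L != 0 by rewrite EL mulf_neq0.
subst L L1 Lm L2 Q.
set L := (1 - q * y) / (1 - q).
set L1 := (1 - q * (q * y)) / (1 - q).
set Lm := (1 - y) / (1 - q).
set L2 := (1 - (q * y) ^+ 2) / (1 - q).
have hD : Dps _ q t 0%N != 0 by rewrite D0 oner_neq0.
have HDf : Dps _ q t = pc (L ^+ 2)^-1 * ((pc L + pc (- L1) * zps) *
                                           (pc L + pc (- (q * Lm)) * zps)).
  apply: Dfactor.
  - rewrite /L; field; by rewrite ?hq1 ?hqy ?h2 ?hinv.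
  - rewrite /t /L /L1 /Lm. field; by rewrite ?hq1 ?hqy ?h2 ?hinv.
  - rewrite /t /L /L1 /Lm; field; by rewrite ?hq1 ?hqy ?h2 ?hinv.
have e1 (G : ps K) : G = pc 1 * G by rewrite const1 mul1r.
split; apply: (cancel_unit _ _ _ _ hD); rewrite DL /c /G1 /G2 !scaleE -!psE_add.
- rewrite (RHSgen _ _ _ _ _ _ _ _ _ _ _ hl0 hl0 HDf) N11.
  apply: pc_lin1.
  + rewrite /L /L1 /Lm /L2; field; by rewrite ?hq1 ?hqy ?h2 ?hinv.
  + rewrite /L /L1 /Lm /L2; field; by rewrite ?hq1 ?hqy ?h2 ?hinv.
- rewrite [fps_geom _ L1]e1.
  rewrite (RHSgen _ _ _ _ _ _ _ _ _ _ _ hl0 hl0 HDf) N10.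
  apply: pc_lin2.
  + rewrite /L /L1 /Lm /L2; field; by rewrite ?hq1 ?hqy ?h2 ?hinv.
  + rewrite /L /L1 /Lm /L2; field; by rewrite ?hq1 ?hqy ?h2 ?hinv.
- rewrite [fps_geom _ (q * _)]e1.
  rewrite (RHSgen _ _ _ _ _ _ _ _ _ _ _ hl0 hl0 HDf) N01.
  apply: pc_lin2.
  + rewrite /L /L1 /Lm /L2; field; by rewrite ?hq1 ?hqy ?h2 ?hinv.
  + rewrite /L /L1 /Lm /L2; field; by rewrite ?hq1 ?hqy ?h2 ?hinv.
Qed.

Theorem lemma2p1 (l : nat) (hl : (0 < l)%N) :
  let c := qint l ^+ 2 / qint (2 * l) in
  let G1 := fps_geom (qint l) (qint l.+1) in
  let G2 := fps_geom (qint l) (qvar * qint l.-1) in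
  [/\ lhs_series l 1 1 =
        fps_scale c (fps_add (fps_scale (qint l.+1) G1)
                             (fps_scale (- (qvar * qint l.-1)) G2)),
      lhs_series l 1 0 =
        fps_scale c (fps_add G1 (fps_scale (qvar ^+ l) G2)) &
      lhs_series l 0 1 =
        fps_scale c (fps_add (fps_scale (qvar ^+ l) G1) G2)].
Proof.
have hq1 : 1 - qvar != 0 by rewrite -[qvar]expr1 qX_neq1.
pose y := qvar ^+ l.-1.
have ql : qvar ^+ l = qvar * y by rewrite /y -exprS prednK.
have Il : qint l = (1 - qvar * y) / (1 - qvar) by rewrite /qint ql.
have Il1 : qint l.+1 = (1 - qvar * (qvar * y)) / (1 - qvar) by rewrite /qint exprS ql.
have Ilm : qint l.-1 = (1 - y) / (1 - qvar) by [].
have I2l : qint (2 * l) = (1 - (qvar * y) ^+ 2) / (1 - qvar) by rewrite /qint mulnC exprM ql.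
have hqy : 1 - qvar * y != 0 by rewrite -ql qX_neq1.
have h2 : 1 - (qvar * y) ^+ 2 != 0 by rewrite -ql -exprM mulnC qX_neq1 // muln_gt0 hl.
exact: (@gen _ qvar y (qint l) (qint l.+1) (qint l.-1) (qint (2 * l)) (qvar ^+ l)
          hq1 hqy h2 Il Il1 Ilm I2l ql).
Qed.
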